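(* Let $\Lambda$ be a closed convex subset of $[0,\infty)$ containing $0$, and let $(G,\ell)$ be a group with an invariant $\Lambda$-valued norm. Then $(G,\ell)$ is metrically LE$\mathcal C_1$, where $\mathcal C_1$ is the class of finite groups with invariant $\Lambda$-valued pseudo-norms, if and only if it is metrically LE$\mathcal C_2$, where $\mathcal C_2$ is the class of finite groups with invariant $\Lambda$-valued norms. The same equivalence holds with the word ''invariant'' omitted throughout.
   Context: A pseudo-norm on $G$ is $\ell:G\to\Lambda$ with $\ell(1)=0$, $\ell(g)=\ell(g^{-1})$, $\ell(gh)\le\ell(g)+\ell(h)$; a norm if $\ell(g)=0\Rightarrow g=1$; invariant if $\ell(h^{-1}gh)=\ell(g)$. For pseudo-normed groups $(G_1,\ell_1),(G_2,\ell_2)$, finite $D\subseteq G_1$ and finite $Q\subseteq\Lambda\cap\mathbb Q$ with $0\in Q$, a map $\varphi:G_1\to G_2$ is a $D$-$Q$-almost-homomorphism if it is injective on $D$, $\varphi(hg)=\varphi(h)\varphi(g)$ whenever $h,g,hg\in D$, and $\ell_1(g)\,\square\,q\iff\ell_2(\varphi(g))\,\square\,q$ for all $g\in D$, $q\in Q$, $\square\in\{<,>,=\}$. For a class $\mathcal C$ of pseudo-normed groups, $(G,\ell)$ is metrically LE$\mathcal C$ if for every finite $D\subseteq G$ and finite $Q\subseteq\Lambda\cap\mathbb Q$ with $0\in Q$ there are $(C,\ell_C)\in\mathcal C$ and a $D$-$Q$-almost-homomorphism $(G,\ell)\to(C,\ell_C)$. *)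

(* Defs.v *)
From HB Require Import structures.
From mathcomp Require Import all_boot all_order all_algebra all_fingroup.
From mathcomp Require Import all_classical all_reals all_analysis.

Set Implicit Arguments.
Unset Strict Implicit.
Unset Printing Implicit Defensive.

Import Order.TTheory GRing.Theory Num.Theory.
Local Open Scope ring_scope.
Local Open Scope classical_set_scope.

Definition convex_subset (R : realType) (L : set R) : Prop :=
  forall x y t : R, L x -> L y -> 0 <= t -> t <= 1 ->
    L (t * x + (1 - t) * y).

Definition pseudo_norm (R : realType) (L : set R) (G : groupType)
    (l : G -> R) : Prop :=
  [/\ forall g, L (l g),
      l 1%g = 0,
      forall g, l (g^-1)%g = l g
    & forall g h, l (g * h)%g <= l g + l h].

Definition is_norm (R : realType) (L : set R) (G : groupType)
    (l : G -> R) : Prop :=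
  pseudo_norm L l /\ forall g, l g = 0 -> g = 1%g.

Definition invariant_fun (R : realType) (G : groupType) (l : G -> R) : Prop :=
  forall g h : G, l (h^-1 * g * h)%g = l g.

Definition almost_hom (R : realType) (G1 G2 : groupType)
    (l1 : G1 -> R) (l2 : G2 -> R) (D : seq G1) (Q : seq rat)
    (phi : G1 -> G2) : Prop :=
  [/\ {in D &, injective phi},
      (forall h g, h \in D -> g \in D -> (h * g)%g \in D ->
         phi (h * g)%g = (phi h * phi g)%g)
    & forall g q, g \in D -> q \in Q ->
        [/\ l1 g < ratr q <-> l2 (phi g) < ratr q,
            l1 g > ratr q <-> l2 (phi g) > ratr q
          & l1 g = ratr q <-> l2 (phi g) = ratr q]].

Definition fin_class (R : realType) :=
  forall C : finGroupType, (C -> R) -> Prop.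

(** Metrically locally embeddable into the class [cls]: D ranges over finite
    subsets of G (given as sequences), Q over finite subsets of Lambda ∩ Q
    containing 0. *)
Definition metrically_LE (R : realType) (L : set R) (cls : fin_class R)
    (G : groupType) (l : G -> R) : Prop :=
  forall (D : seq G) (Q : seq rat),
    0 \in Q -> (forall q, q \in Q -> L (ratr q)) ->
    exists (C : finGroupType) (lC : C -> R),
      cls C lC /\ exists phi : G -> C, almost_hom l lC D Q phi.

Definition C_pseudo (R : realType) (L : set R) : fin_class R :=
  fun C lC => pseudo_norm L lC.
Definition C_norm (R : realType) (L : set R) : fin_class R :=
  fun C lC => is_norm L lC.
Definition C_inv_pseudo (R : realType) (L : set R) : fin_class R :=
  fun C lC => pseudo_norm L lC /\ invariant_fun lC.
Definition C_inv_norm (R : realType) (L : set R) : fin_class R :=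
  fun C lC => is_norm L lC /\ invariant_fun lC.

(* Main.v *)
Require Import Defs.
From HB Require Import structures.
From mathcomp Require Import all_boot all_order all_algebra all_fingroup.
From mathcomp Require Import all_classical all_reals all_analysis.
From mathcomp Require Import lra.
Import Order.TTheory GRing.Theory Num.Theory.
Import numFieldNormedType.Exports.
Local Open Scope ring_scope.
Local Open Scope classical_set_scope.

Lemma fix_norm (R : realType) (L : set R) (G : groupType) (l : G -> R)
  (C : finGroupType) (lC : C -> R) (D : seq G) (Q : seq rat) (phi : G -> C) :
  L `<=` [set x | 0 <= x] ->
  (forall g, l g = 0 -> g = 1%g) -> 0 \in Q -> pseudo_norm L lC ->
  almost_hom l lC D Q phi ->
  exists (C' : finGroupType) (l' : C' -> R),
    is_norm L l' /\ (invariant_fun lC -> invariant_fun l') /\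
    exists phi' : G -> C', almost_hom l l' D Q phi'.
Proof.
move=> Lpos ln0 Q0 [LlC lC1 lCV lCM] [Hinj Hmul Hcmp].
have lCge0 c : 0 <= lC c by apply: Lpos.
have K g : g \in D -> lC (phi g) = 0 -> phi g = 1%g.
  move=> gD h0.
  have [_ _ [_ H3]] := Hcmp g 0%R gD Q0.
  have lg : l g = 0 by rewrite H3 rmorph0.
  move: gD; rewrite (ln0 _ lg) => gD.
  have := Hmul 1%g 1%g gD gD; rewrite mulg1 => /(_ gD) e.
  have : (phi 1%g * (phi 1%g)^-1 = phi 1%g * phi 1%g * (phi 1%g)^-1)%g by rewrite -e.
  by rewrite mulgV mulgK => <-.
case: (boolP [exists c, 0 < lC c]) => [/existsP [c0 Hc0]|/existsPn Hno].
- pose cm := [arg min_(c < c0 | 0 < lC c) lC c]%O.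
  have [cm' Pcm Hmin] : exists2 c, 0 < lC c & forall c', 0 < lC c' -> lC c <= lC c'.
    case: (real_arg_minP (P := fun c => 0 < lC c) (F := lC) Hc0
      (fun c _ => num_real (lC c))) => c Pc Hc.
    by exists c => // c' Hc'; exact: Hc.
  set m := lC cm'.
  pose l' (c : C) := if c == 1%g then 0 else Num.max (lC c) m.
  have l'ge c : c != 1%g -> lC c <= l' c /\ m <= l' c.
    by move=> /negbTE h; rewrite /l' h; split; rewrite le_max lexx ?orbT.
  have l'1 : l' 1%g = 0 by rewrite /l'; case: eqP => // [[]].
  have l'ge0 c : 0 <= l' c.
    case: (eqVneq c 1%g) => [->|h]; first by rewrite l'1.
    by have [_ ?] := l'ge c h; exact: le_trans (ltW Pcm) _.
  exists C, l'; split; [split; [split|]|split].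
  + move=> g; rewrite /l'; case: eqP => _; first by rewrite -lC1.
    by case: (leP (lC g) m) => _; apply: LlC.
  + by rewrite l'1.
  + by move=> g; rewrite /l' invg_eq1 lCV.
  + move=> g h.
    case: (eqVneq g 1%g) => [->|gn1]; first by rewrite mul1g l'1 add0r.
    case: (eqVneq h 1%g) => [->|hn1]; first by rewrite mulg1 l'1 addr0.
    have [a1 a2] := l'ge g gn1; have [b1 b2] := l'ge h hn1.
    rewrite {1}/l'; case: eqP => _; first by rewrite addr_ge0.
    have := lCM g h; rewrite ge_max; set x := lC _ => hx.
    apply/andP; split; first by apply: (le_trans hx); exact: lerD.
    by rewrite -[m]addr0; apply: lerD => //; exact: l'ge0.
  + move=> g; case: (eqVneq g 1%g) => // gn1.
    have [_ H] := l'ge g gn1 => h0.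
    by move: (lt_le_trans Pcm H); rewrite h0 ltxx.
  + move=> Hinv g h; rewrite /l'.
    have E : ((h^-1 * g * h)%g == 1%g) = (g == 1%g).
      rewrite -mulgA; exact: (conjg_eq1 g h).
    by rewrite E Hinv.
  + exists phi; split => // g q gD qQ.
    have -> : l' (phi g) = lC (phi g).
      rewrite /l'; case: eqP => [->|pn1]; first by rewrite lC1.
      rewrite max_l //; apply: Hmin; rewrite lt_def lCge0 andbT.
      by apply/eqP => /(K g gD).
    exact: Hcmp.
- have lC0 c : lC c = 0.
    by apply/eqP; rewrite eq_le lCge0 andbT leNgt Hno.
  exists ('I_1 : finGroupType), (fun _ => 0); split; [split; [split|]|split].
  + by move=> _; rewrite -(lC1).
  + by [].
  + by [].
  + by move=> *; rewrite addr0.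
  + by move=> g _; rewrite ord1; apply/val_inj.
  + by [].
  + exists (fun _ => 1%g); split.
    * move=> x y xD yD _.
      have [_ _ [_ H3]] := Hcmp x 0%R xD Q0.
      have [_ _ [_ H4]] := Hcmp y 0%R yD Q0.
      have lx : l x = 0 by have := H3; rewrite lC0 rmorph0; apply.
      have ly : l y = 0 by have := H4; rewrite lC0 rmorph0; apply.
      by rewrite (ln0 x lx) (ln0 y ly).
    * by move=> *; rewrite (ord1 (_ * _)%g) (ord1 1%g).
    * move=> g q gD qQ.
      have [_ _ [_ H3]] := Hcmp g 0%R gD Q0.
      have lg : l g = 0 by have := H3; rewrite lC0 rmorph0; apply.
      by rewrite lg.
Qed.

Theorem proposition2p6 (R : realType) (L : set R) :
  closed L -> convex_subset L -> L `<=` [set x | 0 <= x] -> L 0 ->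
  (forall (G : groupType) (l : G -> R), is_norm L l -> invariant_fun l ->
     metrically_LE L (C_inv_pseudo L) l <-> metrically_LE L (C_inv_norm L) l)
  /\
  (forall (G : groupType) (l : G -> R), is_norm L l ->
     metrically_LE L (C_pseudo L) l <-> metrically_LE L (C_norm L) l).
Proof.
move=> _ _ Lpos _; split.
- move=> G l [_ ln0] _; split => H D Q Q0 HQ.
  + have [C [lC [[Hp Hi] [phi Hphi]]]] := H D Q Q0 HQ.
    have [C' [l' [Hn [Hi' [phi' H']]]]] := fix_norm _ _ _ _ _ _ _ _ _ Lpos ln0 Q0 Hp Hphi.
    exists C', l'; split; [split => //; exact: Hi' | by exists phi'].
  + have [C [lC [[[Hp _] Hi] Hphi]]] := H D Q Q0 HQ.
    by exists C, lC.
- move=> G l [_ ln0]; split => H D Q Q0 HQ.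
  + have [C [lC [Hp [phi Hphi]]]] := H D Q Q0 HQ.
    have [C' [l' [Hn [_ [phi' H']]]]] := fix_norm _ _ _ _ _ _ _ _ _ Lpos ln0 Q0 Hp Hphi.
    by exists C', l'; split => //; exists phi'.
  + have [C [lC [[Hp _] Hphi]]] := H D Q Q0 HQ.
    by exists C, lC.
Qed.
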